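(* With notation as in the context, define for $X,Y\in\zeta_s^+(V_0)$ the product $X\circ Y:=(Y+s)(X+Y)^{-1}(X+s)-s$. Then for all $x,y\in\mathrm{H}(V_0^s)$ one has $xy\in\mathrm{H}(V_0^s)$ and $a_{xy}=a_x\circ a_y$.
   Context: $V_0=V_0^+\oplus V_0^-$ is an orthogonal decomposition of a finite-dimensional complex Hermitian space, $s=\mathrm{Id}_{V_0^+}\oplus(-\mathrm{Id}_{V_0^-})$, $\mathrm{H}(V_0^s)=\{g\in\mathrm{GL}(V_0):g^\dagger sg<s\}$, $\zeta_s^+(V_0)=\{X\in\mathrm{End}(V_0):\tfrac12(X+X^\dagger)>0,\ \mathrm{Det}(X+s)\ne0\}$, and $a_h=s(1+h)(1-h)^{-1}$ for $h\in\mathrm{H}(V_0^s)$ (with $1=\mathrm{Id}_{V_0}$); $1-h$ is invertible and $a_h\in\zeta_s^+(V_0)$. Note $X+Y$ is invertible for $X,Y\in\zeta_s^+(V_0)$ since $\mathfrak{Re}(X+Y)>0$. *)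

(* Defs.v *)
From HB Require Import structures.
From mathcomp Require Import all_boot all_order all_algebra.
Set Implicit Arguments. Unset Strict Implicit. Unset Printing Implicit Defensive.
Import Order.TTheory GRing.Theory Num.Theory.
Local Open Scope ring_scope.

(* V_0 = C^n with the standard Hermitian inner product, C any numeric
   algebraically closed field (e.g. algC, or complex R for R : rcfType). *)

Definition adj (C : numClosedFieldType) (n : nat) (X : 'M[C]_n) : 'M[C]_n :=
  map_mx Num.conj (X^T).

Definition posdef (C : numClosedFieldType) (n : nat) (H : 'M[C]_n) : Prop :=
  adj H = H /\
  forall v : 'cV[C]_n, v != 0 -> 0 < ((map_mx Num.conj v^T) *m H *m v) 0 0.

(* s = Id on V0^+ (+) -Id on V0^- for an orthogonal decomposition:
   exactly a self-adjoint involution *)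
Definition is_sym_involution (C : numClosedFieldType) (n : nat) (s : 'M[C]_n) : Prop :=
  adj s = s /\ s *m s = 1%:M.

Definition Hs (C : numClosedFieldType) (n : nat) (s g : 'M[C]_n) : Prop :=
  g \in unitmx /\ posdef (s - adj g *m s *m g).

Definition zeta_plus (C : numClosedFieldType) (n : nat) (s X : 'M[C]_n) : Prop :=
  posdef (2^-1 *: (X + adj X)) /\ \det (X + s) != 0.

Definition a_of (C : numClosedFieldType) (n : nat) (s h : 'M[C]_n) : 'M[C]_n :=
  s *m (1%:M + h) *m invmx (1%:M - h).

Definition circ (C : numClosedFieldType) (n : nat) (s X Y : 'M[C]_n) : 'M[C]_n :=
  (Y + s) *m invmx (X + Y) *m (X + s) - s.

(* Main.v *)
Require Import Defs.
From HB Require Import structures.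
From mathcomp Require Import all_boot all_order all_algebra.
Import Order.TTheory GRing.Theory Num.Theory.
Local Open Scope ring_scope.

Lemma z1 (V : zmodType) (a h : V) : a + h = a + a - (a - h).
Proof. rewrite opprB addrA. rewrite [RHS]addrAC addrK //. Qed.
Lemma z2 (V : zmodType) (o a b c : V) : o - c = (o - a) + (o - b) - ((o - b) - (a - c)).
Proof. rewrite [-(_ - (a - c))]opprB addrA (addrAC (o - a) (o - b) (a - c)) addrK addrA subrK //. Qed.
Lemma z3 (V : zmodType) (o a b : V) : (a + a - o) + (b + b - o) = (a + b - o) + (a + b - o).
Proof. by rewrite addrACA [a + a + _]addrACA [RHS]addrACA. Qed.

Section Aux.
Variable C : numClosedFieldType.
Variable n : nat.
Implicit Types A B M : 'M[C]_n.

Lemma adjM A B : adj (A *m B) = adj B *m adj A.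
Proof. by rewrite /adj trmx_mul map_mxM. Qed.

Lemma adjB A B : adj (A - B) = adj A - adj B.
Proof. by rewrite /adj linearB /= map_mxB. Qed.

Lemma adjD A B : adj (A + B) = adj A + adj B.
Proof. by rewrite /adj linearD /= map_mxD. Qed.

Lemma adjK A : adj (adj A) = A.
Proof.
apply/matrixP=> i j; rewrite /adj !mxE conjCK //.
Qed.

Definition rc (v : 'cV[C]_n) : 'rV[C]_n := map_mx Num.conj v^T.

Lemma rcM A (v : 'cV[C]_n) : rc (A *m v) = rc v *m adj A.
Proof. by rewrite /rc /adj trmx_mul map_mxM. Qed.

Lemma unit_1m (s h : 'M[C]_n) : Hs s h -> (1%:M - h) \in unitmx.
Proof.
move=> [hu [_ hp]].
rewrite -unitmx_tr unitmxE unitfE; apply/negP => /det0P [u u0 hu0].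
have v0 : u^T != 0 by rewrite trmx_eq0.
have := hp _ v0.
have hv : h *m u^T = u^T.
  apply/eqP; rewrite eq_sym -subr_eq0 -{1}(mul1mx u^T) -mulmxBl.
  by rewrite -trmx_eq0 trmx_mul trmxK hu0.
have hr : rc u^T *m adj h = rc u^T by rewrite -rcM hv.
rewrite mulmxBr mulmxBl -!mulmxA hv (mulmxA _ (adj h)).
rewrite -/(rc u^T) hr subrr mxE ltxx //.
Qed.
End Aux.
Arguments rc {C n}.

Theorem mainTheorem13 (C : numClosedFieldType) (n : nat) (s : 'M[C]_n) :
  is_sym_involution s ->
  forall x y : 'M[C]_n, Hs s x -> Hs s y ->
    Hs s (x *m y) /\ a_of s (x *m y) = circ s (a_of s x) (a_of s y).
Proof.
move=> [sa ss] x y Hx Hy.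
have su : s \in unitmx by case: (mulmx1_unit ss).
have Hxy : Hs s (x *m y).
  case: Hx Hy => [xu [xh xp]] [yu [yh yp]].
  have key : s - adj (x *m y) *m s *m (x *m y) =
     (s - adj y *m s *m y) + adj y *m (s - adj x *m s *m x) *m y.
    rewrite adjM mulmxBr mulmxBl !mulmxA.
    by rewrite addrA subrK.
  split; first by rewrite unitmx_mul xu yu.
  split.
    by rewrite adjB !adjM !adjK sa !mulmxA.
  move=> v v0; rewrite key mulmxDr mulmxDl mxE; apply: addr_gt0; first exact: yp.
  have yv0 : y *m v != 0.
    apply: contraNneq v0 => e; by rewrite -(mulKmx yu v) e mulmx0.
  have := xp _ yv0; rewrite -/(rc v) -/(rc (y *m v)) rcM !mulmxA //.
split=> //.
set u := 1%:M - x; set w := 1%:M - y; set P := 1%:M - x *m y.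
have uu : u \in unitmx by exact: unit_1m Hx.
have wu : w \in unitmx by exact: unit_1m Hy.
have Pu : P \in unitmx by exact: unit_1m Hxy.
set ui := invmx u; set wi := invmx w; set Pi := invmx P.
have aE : forall h, (1%:M - h) \in unitmx ->
    a_of s h = s *m (invmx (1%:M - h) + invmx (1%:M - h)) - s.
  move=> h hu; rewrite /a_of (z1 _ 1%:M h) -mulmxA [(_ - (1%:M - h)) *m _]mulmxBl mulmxV // mulmxDl !mul1mx.
  by rewrite mulmxBr mulmx1.
have Puw : P = u + w - u *m w.
  rewrite /P /u /w mulmxBl !mulmxBr !mul1mx mulmx1.
  exact: z2.
have QE : ui *m P *m wi = ui + wi - 1%:M.
  rewrite Puw mulmxBr mulmxDr mulmxBl mulmxDl.
  rewrite /ui mulVmx // mul1mx -mulmxA /wi mulmxV // mulmx1.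
  rewrite mulmxA mulVmx // mul1mx mulmxV //.
  by rewrite [wi + ui]addrC.
set Q := ui *m P *m wi.
have Qw : Q *m w *m Pi = ui.
  by rewrite /Q -(mulmxA _ wi) mulVmx // mulmx1 -mulmxA mulmxV // mulmx1.
have Qu : Q \in unitmx by rewrite !unitmx_mul /ui /wi !unitmx_inv uu wu Pu.
have QQ : Q + Q = (2%:R)%:M *m Q by rewrite mul_scalar_mx scaler_nat mulr2n.
set D := s *m (Q + Q).
have Du : D \in unitmx.
  rewrite /D unitmx_mul su QQ unitmx_mul Qu andbT.
  by rewrite unitmxE det_scalar unitfE expf_neq0 // pnatr_eq0.
rewrite /circ (aE x uu) (aE y wu) (aE _ Pu) -/u -/w -/P -/ui -/wi -/Pi.
have DE : s *m (ui + ui) - s + (s *m (wi + wi) - s) = D.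
  by rewrite /D /Q QE !(mulmxDr, mulmxN, mulmxBr) !mulmx1 z3.
rewrite DE !subrK.
have e1 : invmx D *m (s *m (ui + ui)) = w *m Pi.
  rewrite -[w *m Pi](mulKmx Du) /D -!mulmxA mulmxDl !mulmxA Qw //.
rewrite -mulmxA e1 -mulmxA [(wi + wi) *m _]mulmxA mulmxDl /wi mulVmx // mulmxDl mul1mx.
by [].
Qed.
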